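(* Let $\alpha>0$, let $X_{0-}$ be a real-valued random variable and let $Z$ be a continuous stochastic process with $Z_0=0$, independent of $X_{0-}$, satisfying the crossing property (see context). For $\ell\in M$ define $\Gamma[\ell]_t=\mathbb{P}(\tau[\ell]\le t)$ with $\tau[\ell]=\inf\{t\ge0:X_{0-}+Z_t-\alpha\ell_t\le0\}$, and for $\Delta>0$ define $\Gamma_\Delta[\ell]_t=\mathbb{P}(\tau^\Delta[\ell]\le t)$ with $\tau^\Delta[\ell]=\inf\{t\ge0:X_{0-}+Z_{\Delta\lfloor t/\Delta\rfloor}-\alpha\ell_{\Delta\lfloor t/\Delta\rfloor}\le0\}$. Let $\Delta_n>0$ with $\Delta_n\to0$ and suppose $\ell^n\to\ell$ in $M$. Then $\lim_{n\to\infty}\Gamma_{\Delta_n}[\ell^n]=\Gamma[\ell]$ in $M$.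
   Context: Crossing property: for every stopping time $\tau$ with respect to the natural filtration of $X_{0-}+Z$ and every $h>0$, $\mathbb{P}(\tau<\infty,\ \inf_{0\le s\le h}(Z_{\tau+s}-Z_\tau)=0)=0$. $M$ is the set of càdlàg increasing functions $\ell:\overline{\mathbb{R}}\to[0,1]$ ($\overline{\mathbb{R}}$ the two-point compactification of $\mathbb{R}$) with $\ell_{0-}=0$ and $\ell_\infty=1$, with the topology: $\ell^n\to\ell$ iff $\ell^n_t\to\ell_t$ for all $t\in[0,\infty]$ at which $\ell$ is continuous. *)

(* Defs.v *)
From HB Require Import structures.
From mathcomp Require Import all_boot all_order all_algebra.
From mathcomp Require Import all_classical all_reals all_analysis.
Set Implicit Arguments. Unset Strict Implicit. Unset Printing Implicit Defensive.
Import Order.TTheory GRing.Theory Num.Theory.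
Import numFieldNormedType.Exports.
Local Open Scope classical_set_scope.
Local Open Scope ring_scope.

Section Defs.
Context {R : realType} {d : measure_display} {Omega : measurableType d}.

Definition gen_sigma (I : set R) (Y : R -> Omega -> R) : set (set Omega) :=
  <<s [set Y s @^-1` B | s in I & B in [set B : set R | measurable B]] >>.

Definition sigma_rv (X : Omega -> R) : set (set Omega) :=
  <<s [set X @^-1` B | B in [set B : set R | measurable B]] >>.

Definition indep_rv_process (P : probability Omega R) (X : Omega -> R)
    (Z : R -> Omega -> R) : Prop :=
  forall A B, sigma_rv X A -> gen_sigma `[0, +oo[ Z B ->
    P (A `&` B) = (P A * P B)%E.

Definition natural_filtration (Y : R -> Omega -> R) (t : R) :
  set (set Omega) := gen_sigma `[0, t] Y.

Definition stopping_time (Y : R -> Omega -> R) (tau : Omega -> \bar R) : Prop :=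
  (forall w, (0 <= tau w)%E) /\
  forall t : R, 0 <= t -> natural_filtration Y t [set w | (tau w <= t%:E)%E].

Definition crossing_property (P : probability Omega R) (X0 : Omega -> R)
    (Z : R -> Omega -> R) : Prop :=
  forall tau : Omega -> \bar R,
    stopping_time (fun t w => X0 w + Z t w) tau ->
    forall h : R, 0 < h ->
    P.-negligible [set w | (tau w < +oo)%E /\
        inf [set Z (fine (tau w) + s) w - Z (fine (tau w)) w | s in `[0, h]] = 0].

(* the space M: functions on the extended reals, increasing, [0,1]-valued,
   cadlag, with l_{0-} = 0 and l_{+oo} = 1 *)
Definition in_M (l : \bar R -> R) : Prop :=
  {homo l : s t / (s <= t)%E >-> s <= t} /\
  (forall t, 0 <= l t <= 1) /\
  (forall t, (t < 0)%E -> l t = 0) /\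
  l +oo%E = 1 /\
  (forall x : R, (fun r : R => l r%:E) @ at_right x --> l x%:E) /\
  (forall x : R, cvg ((fun r : R => l r%:E) @ at_left x)) /\
  ((fun r : R => l r%:E) @ -oo --> l -oo%E) /\
  cvg ((fun r : R => l r%:E) @ +oo).

Definition cvg_M (ln : nat -> \bar R -> R) (l : \bar R -> R) : Prop :=
  forall t : \bar R, (0 <= t)%E -> {for t, continuous l} ->
    (fun n => ln n t) @ \oo --> l t.

Definition hit_time (alpha : R) (X0 : Omega -> R) (Z : R -> Omega -> R)
    (l : \bar R -> R) (w : Omega) : \bar R :=
  ereal_inf [set t%:E | t in [set t : R | 0 <= t /\ X0 w + Z t w - alpha * l t%:E <= 0]].

Definition grid (Delta t : R) : R := (Num.floor (t / Delta))%:~R * Delta.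

Definition hit_time_disc (Delta alpha : R) (X0 : Omega -> R) (Z : R -> Omega -> R)
    (l : \bar R -> R) (w : Omega) : \bar R :=
  ereal_inf [set t%:E | t in [set t : R | 0 <= t /\
     X0 w + Z (grid Delta t) w - alpha * l (grid Delta t)%:E <= 0]].

Definition Gamma (P : probability Omega R) (alpha : R) (X0 : Omega -> R)
    (Z : R -> Omega -> R) (l : \bar R -> R) (t : \bar R) : R :=
  fine (P [set w | (hit_time alpha X0 Z l w <= t)%E]).

Definition Gamma_disc (P : probability Omega R) (Delta alpha : R) (X0 : Omega -> R)
    (Z : R -> Omega -> R) (l : \bar R -> R) (t : \bar R) : R :=
  fine (P [set w | (hit_time_disc Delta alpha X0 Z l w <= t)%E]).

End Defs.

(* Main.v *)
Require Import Defs.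
From HB Require Import structures.
From mathcomp Require Import all_boot all_order all_algebra.
From mathcomp Require Import all_classical all_reals all_analysis.
From mathcomp Require Import lra.
Import Order.TTheory GRing.Theory Num.Theory.
Import numFieldNormedType.Exports.
Local Open Scope classical_set_scope.
Local Open Scope ring_scope.
Section LM.
Context {R : realType} (l : \bar R -> R) (hl : in_M l).

Lemma lM_mono {s t : R} : s <= t -> l s%:E <= l t%:E.
Proof. by case: hl => homo _ st; apply: homo; rewrite lee_fin. Qed.

Lemma lM_rc (x : R) : (fun r : R => l r%:E) @ x^'+ --> l x%:E.
Proof. by case: hl => _ [_ [_ [_ [rc _]]]]. Qed.

Lemma lM_lc (x : R) : cvg ((fun r : R => l r%:E) @ x^'-).
Proof. by case: hl => _ [_ [_ [_ [_ [lc _]]]]]. Qed.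

Lemma lM_ub (x e : R) : 0 < e -> \forall u \near x, l u%:E < l x%:E + e.
Proof.
move=> e0; move: (lM_rc x) => /cvgr_dist_lt /(_ e e0); rewrite near_withinE.
apply: filterS => u Hu; case: (leP u x) => [ux|xu].
  by rewrite (le_lt_trans (lM_mono ux))// ltrDl.
have := Hu xu; rewrite distrC => /(le_lt_trans (ler_norm _)).
by rewrite ltrBlDl.
Qed.

Lemma lM_contR (v : R) : (fun r : R => l r%:E) @ v --> l v%:E ->
  {for v%:E, continuous l}.
Proof.
move=> H U /H HU; apply/nbhs_EFin; exact: HU.
Qed.

Lemma lM_cont_pt (a b : R) : a < b -> exists2 v, a < v < b & {for v%:E, continuous l}.
Proof.
move=> ab; apply: contrapT => /forall2NP Hn.
pose F := fun r : R => l r%:E.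
have ndF : {in `[a, b] &, nondecreasing_fun F}.
  by move=> x y _ _ xy; exact: lM_mono.
have cF := discontinuity_countable ndF.
have sub : [set` `]a, b[] `<=` [set x | (x \in `]a, b[) /\ discontinuity F x].
  move=> v /= vab; split; first by rewrite inE.
  have vab' : a < v < b by move: vab; rewrite in_itv.
  case: (Hn v) => // Hc.
  have rc := lM_rc v.
  split; [exact: lM_lc | by apply/cvg_ex; exists (l v%:E) |].
  apply/negP => /eqP E; apply: Hc; apply: lM_contR.
  apply/left_right_continuousP; split => //.
  have -> : l v%:E = lim (F x @[x --> v^'-]) by rewrite E (cvg_lim _ rc).
  exact: lM_lc.
have := countable_lebesgue_measure0 (sub_countable (subset_card_le sub) cF).
by rewrite lebesgue_measure_itv /= lte_fin ab => /eqP; rewrite -EFinB eqe subr_eq0 gt_eqF.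
Qed.
End LM.

Section Zc.
Context {R : realType}.

Lemma Z_near (g : R -> R) (hg : {within `[0, +oo[, continuous g}) (x : R)
  (x0 : 0 <= x) (e : R) (e0 : 0 < e) :
  \forall u \near x, 0 <= u -> `|g u - g x| < e.
Proof.
have Ax : [set` `[0, +oo[%R] x by rewrite /= in_itv /= x0.
have := (iffLR (subspace_continuousP _ _) hg) x Ax.
move/cvgr_dist_lt => /(_ e e0); rewrite near_withinE.
apply: filterS => u Hu u0; rewrite distrC; apply: Hu.
by rewrite /= in_itv /= u0.
Qed.

End Zc.

Section Hit.
Context {R : realType}.

Definition hset (f : R -> R) : set (\bar R) :=
  [set t%:E | t in [set t : R | 0 <= t /\ f t <= 0]].

Lemma hset_ge0 f : (0 <= ereal_inf (hset f))%E.
Proof. by apply: le_ereal_inf_tmp => _ [t [t0 _] <-]; rewrite lee_fin. Qed.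

Lemma hset_le_intro {f s} : 0 <= s -> f s <= 0 -> (ereal_inf (hset f) <= s%:E)%E.
Proof. by move=> s0 fs; apply: ge_ereal_inf; exists s%:E => //; exists s. Qed.

Lemma hset_le (f : R -> R)
  (frc : forall r, 0 <= r -> 0 < f r -> \forall u \near r, r <= u -> 0 < f u)
  (t : R) :
  (ereal_inf (hset f) <= t%:E)%E <-> exists s, [/\ 0 <= s, s <= t & f s <= 0].
Proof.
split; last by move=> [s [s0 st fs]]; apply: le_trans (hset_le_intro s0 fs) _; rewrite lee_fin.
move=> H; have H0 := hset_ge0 f.
have fin : ereal_inf (hset f) \is a fin_num.
  by rewrite ge0_fin_numE // (le_lt_trans H) // ltry.
set r := fine (ereal_inf (hset f)).
have rE : ereal_inf (hset f) = r%:E by rewrite fineK.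
have r0 : 0 <= r by rewrite -lee_fin -rE.
have rt : r <= t by rewrite -lee_fin -rE.
exists r; split => //; rewrite leNgt; apply/negP => fr.
have /nbhs_ballP [e /= e0 He] := frc r r0 fr.
have : ((r + e)%:E <= ereal_inf (hset f))%E.
  apply: le_ereal_inf_tmp => _ [s [s0 fs] <-]; rewrite lee_fin.
  have rs : r <= s by rewrite -lee_fin -rE; apply: ereal_inf_lbound; exists s.
  rewrite leNgt; apply/negP => ser.
  have hb : ball r e s.
    by rewrite -ball_normE /ball_ /= distrC ger0_norm ?subr_ge0 // ltrBlDl.
  have := He s hb rs.
  by move=> /lt_le_trans /(_ fs); rewrite ltxx.
by rewrite rE lee_fin gerDl leNgt e0.
Qed.

End Hit.

Section Disc.
Context {R : realType}.

Definition dset (D : R) (f : R -> R) : set (\bar R) :=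
  [set t%:E | t in [set t : R | 0 <= t /\ f (grid D t) <= 0]].

Lemma grid_nat (D : R) (k : nat) : 0 < D -> grid D (k%:R * D) = k%:R * D.
Proof.
move=> D0; rewrite /grid mulfK ?gt_eqF //.
have -> : (k%:R : R) = (k%:Z)%:~R by [].
by rewrite intrKfloor.
Qed.

Lemma dset_le (D : R) (D0 : 0 < D) (f : R -> R) (t : R) :
  (ereal_inf (dset D f) <= t%:E)%E <-> exists k : nat, k%:R * D <= t /\ f (k%:R * D) <= 0.
Proof.
split; last first.
  move=> [k [kt fk]]; apply: ge_ereal_inf; exists (k%:R * D)%:E; last by rewrite lee_fin.
  by exists (k%:R * D) => //; split; [rewrite mulr_ge0 // ltW | rewrite grid_nat].
move=> H.
have tb : t < (Num.floor (t / D) + 1)%:~R * D by rewrite -ltr_pdivrMr // floorD1_gt.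
have /ereal_inf_lt [_ [t' [t'0 ft'] <-]] : (ereal_inf (dset D f) < ((Num.floor (t / D) + 1)%:~R * D)%:E)%E.
  by apply: le_lt_trans H _; rewrite lte_fin.
rewrite lte_fin => t'b.
case E: (Num.floor (t' / D)) => [k|k]; last first.
  by have := floor_ge0 (t' / D); rewrite E /= divr_ge0 // ltW.
exists k; have gk : grid D t' = k%:R * D by rewrite /grid E.
split; last by rewrite -gk.
have : (Num.floor (t' / D) < Num.floor (t / D) + 1).
  by rewrite floor_lt_int ltr_pdivrMr.
rewrite E ltzD1 floor_ge_int => kt.
by rewrite -ler_pdivlMr.
Qed.

End Disc.

Section Path.
Context {R : realType} (g : R -> R) (hg : {within `[0, +oo[, continuous g})
  (l : \bar R -> R) (hl : in_M l) (alpha : R) (a0 : 0 < alpha).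

Let f u := g u - alpha * l u%:E.

Lemma path_lsc {r : R} : 0 <= r -> forall e : R, 0 < e ->
  \forall u \near r, 0 <= u -> f r - e < f u.
Proof.
move=> r0 e e0; have e2 : 0 < e / 2 by rewrite divr_gt0.
have e2a : 0 < e / 2 / alpha by rewrite divr_gt0.
near=> u.
have h0 : 0 <= u -> `|g u - g r| < e / 2 by near: u; exact: Z_near.
have h3 : l u%:E < l r%:E + e / 2 / alpha by near: u; exact: lM_ub.
move=> u0; have /ltr_normlP [h1 h2] := h0 u0.
have h4 : alpha * l u%:E < alpha * l r%:E + e / 2.
  by move: h3; rewrite -(ltr_pM2l a0) mulrDr mulrCA mulfV ?gt_eqF // mulr1.
rewrite /f; lra.
Unshelve. all: end_near. Qed.

Lemma path_frc (r : R) : 0 <= r -> 0 < f r -> \forall u \near r, r <= u -> 0 < f u.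
Proof.
move=> r0 fr; have := path_lsc r0 (f r) fr; apply: filterS => u H ru.
by have := H (le_trans r0 ru); rewrite subrr.
Qed.

Lemma path_unif (t : R) : (forall s, 0 <= s -> s <= t -> 0 < f s) ->
  exists k : nat, forall u, 0 <= u -> u <= t -> k.+1%:R^-1 < f u.
Proof.
move=> Hpos.
have : compact [set` `[0, t]] by exact: segment_compact.
move/compact_near_coveringP => cpt.
have [|k Hk] := @filter_ex _ \oo _ _ (cpt nat \oo (fun k u => 0 <= u -> u <= t -> k.+1%:R^-1 < f u) _ _).
- move=> x; rewrite /= in_itv /= => /andP [x0 xt].
  have fx := Hpos x x0 xt.
  have fx2 : 0 < f x / 2 by rewrite divr_gt0.
  near=> u k.
  have h1 : 0 <= u -> f x - f x / 2 < f u by near: u; apply: path_lsc.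
  have h2 : k.+1%:R^-1 < f x / 2.
    by near: k; exact: (near_infty_natSinv_lt (PosNum fx2)).
  move=> u0 ut; apply: lt_trans h2 _; move: (h1 u0).
  by rewrite {1}(splitr (f x)) addrK.
- exists k => u u0 ut; apply: Hk => //.
  by rewrite /= in_itv /= u0 ut.
Unshelve. all: end_near. Qed.

End Path.

Lemma grid_le {R : realType} (D x : R) : 0 < D -> grid D x <= x.
Proof. by move=> D0; rewrite /grid -ler_pdivlMr // floor_le. Qed.

Lemma grid_gt {R : realType} (D x : R) : 0 < D -> x - D < grid D x.
Proof.
move=> D0; rewrite /grid ltrBlDr -[X in _ < _ + X]mul1r -mulrDl.
by rewrite -ltr_pdivrMr // -[1]/(1%:~R) -intrD floorD1_gt.
Qed.

Lemma mul_div_a {R : realType} (a x : R) : 0 < a -> a * (x / a) = x.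
Proof. by move=> a0; rewrite mulrC divfK // gt_eqF. Qed.

Section PathN.
Context {R : realType} (g : R -> R) (hg : {within `[0, +oo[, continuous g})
  (l : \bar R -> R) (hl : in_M l) (alpha : R) (a0 : 0 < alpha)
  (Delta : nat -> R) (D0 : forall n, 0 < Delta n) (Dcvg : Delta @ \oo --> 0)
  (ln : nat -> \bar R -> R) (hln : forall n, in_M (ln n)) (cv : cvg_M ln l).

Let f u := g u - alpha * l u%:E.
Let fn n u := g u - alpha * ln n u%:E.

Lemma lower_path (s t : R) : 0 <= s -> s < t -> f s < 0 ->
  \forall n \near \oo, (ereal_inf (dset (Delta n) (fn n)) <= t%:E)%E.
Proof.
move=> s0 st fs; set eta := - f s.
have eta0 : 0 < eta by rewrite oppr_gt0.
have e4 : 0 < eta / 4 by rewrite divr_gt0.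
have e4a : 0 < eta / 4 / alpha by rewrite divr_gt0.
have /nbhs_ballP [dl /= dl0 Hdl] := @Z_near R g hg s s0 _ e4.
set dl' := Num.min dl (t - s) / 2.
have dl'0 : 0 < dl' by rewrite divr_gt0 // lt_min dl0 subr_gt0.
have hm1 : Num.min dl (t - s) <= dl by rewrite ge_min lexx.
have hm2 : Num.min dl (t - s) <= t - s by rewrite ge_min lexx orbT.
have dl'd : dl' < dl by rewrite /dl'; lra.
have dl't : dl' < t - s by rewrite /dl'; lra.
set t' := s + dl'.
have sdl : s < s + dl' by rewrite ltrDl.
have [v /andP [sv vt'] cv_v] := lM_cont_pt _ hl _ _ sdl.
have v0 : 0 <= v by rewrite (le_trans s0) // ltW.
have := cv (v%:E) _ cv_v; rewrite lee_fin => /(_ v0) /cvgr_dist_lt /(_ _ e4a) Hl.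
have := Dcvg; move=> /cvgr_dist_lt /(_ (t' - v)); rewrite subr_gt0 => /(_ vt') HD.
near=> n.
have hl1 : `|l v%:E - ln n v%:E| < eta / 4 / alpha by near: n; exact: Hl.
have hD : `|0 - Delta n| < t' - v by near: n; exact: HD.
apply: le_trans (_ : t'%:E <= t%:E)%E; last by rewrite lee_fin /t'; lra.
apply: hset_le_intro => //=.
  by rewrite /t' addr_ge0 // ltW.
set G := grid (Delta n) t'.
have Gt' : G <= t' := grid_le (Delta n) t' (D0 n).
have Gv : v < G.
  have := grid_gt (Delta n) t' (D0 n); rewrite -/G; apply: le_lt_trans.
  move: hD; rewrite sub0r normrN ger0_norm; last exact: ltW (D0 n).
  move=> hD; lra.
have G0 : 0 <= G by rewrite (le_trans v0) // ltW.
have hb : ball s dl G.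
  rewrite -ball_normE /ball_ /= distrC ger0_norm ?subr_ge0; last first.
    by rewrite (le_trans (ltW sv)) // ltW.
  rewrite ltrBlDl (le_lt_trans Gt') // /t' ltrD2l //.
have /ltr_normlP [hz1 hz2] := Hdl G hb G0.
have m1 : ln n v%:E <= ln n G%:E by apply: (lM_mono _ (hln n)); rewrite ltW.
have m2 : l s%:E <= l v%:E by apply: (lM_mono _ hl); rewrite ltW.
have /ltr_normlP [hl2 hl3] := hl1.
have : alpha * (l v%:E - ln n v%:E) < alpha * (eta / 4 / alpha) by rewrite ltr_pM2l.
rewrite mul_div_a // => h5.
have m1' : alpha * ln n v%:E <= alpha * ln n G%:E by rewrite ler_pM2l.
have m2' : alpha * l s%:E <= alpha * l v%:E by rewrite ler_pM2l.
rewrite /fn; move: fs; rewrite /eta /f in e4 h5 hz1 hz2 *; lra.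
Unshelve. all: end_near. Qed.

Lemma upper_path (t : R) : (forall s, 0 <= s -> s <= t -> 0 < f s) ->
  \forall n \near \oo, ~ (ereal_inf (dset (Delta n) (fn n)) <= t%:E)%E.
Proof.
move=> Hpos.
have : compact [set` `[0, t]] by exact: segment_compact.
move/compact_near_coveringP => cpt.
have := cpt nat \oo (fun n u => 0 <= u -> u <= t -> 0 < fn n u) _.
move=> /(_ _) H; apply: filterS (H _) => [n Hn|].
  move/(dset_le _ (D0 n)) => [k [kt fk]].
  have k0 : 0 <= k%:R * Delta n by rewrite mulr_ge0 // ltW.
  have := Hn (k%:R * Delta n); rewrite /= in_itv /= k0 kt => /(_ isT isT isT).
  by rewrite ltNge fk.
move=> x; rewrite /= in_itv /= => /andP [x0 xt].
set eta := f x.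
have eta0 : 0 < eta := Hpos x x0 xt.
have e4 : 0 < eta / 4 by rewrite divr_gt0.
have e4a : 0 < eta / 4 / alpha by rewrite divr_gt0.
have /nbhs_ballP [dl /= dl0 Hdl] := lM_ub _ hl x _ e4a.
have xdl : x < x + dl by rewrite ltrDl.
have [v /andP [xv vxd] cv_v] := lM_cont_pt _ hl _ _ xdl.
have v0 : 0 <= v by rewrite (le_trans x0) // ltW.
have lv : l v%:E < l x%:E + eta / 4 / alpha.
  apply: Hdl; rewrite -ball_normE /ball_ /= distrC ger0_norm ?subr_ge0 ?ltW //.
  by rewrite ltrBlDl.
have := cv (v%:E) _ cv_v; rewrite lee_fin => /(_ v0) /cvgr_dist_lt /(_ _ e4a) Hl.
near=> u n.
have hl1 : `|l v%:E - ln n v%:E| < eta / 4 / alpha by near: n; exact: Hl.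
have hz : 0 <= u -> `|g u - g x| < eta / 4 by near: u; exact: Z_near.
have uv : u < v by near: u; exact: lt_nbhsl.
move=> u0 ut.
have /ltr_normlP [hz1 hz2] := hz u0.
have m1 : ln n u%:E <= ln n v%:E by apply: (lM_mono _ (hln n)); rewrite ltW.
have /ltr_normlP [hl2 hl3] := hl1.
have : alpha * (ln n v%:E - l v%:E) < alpha * (eta / 4 / alpha) by rewrite ltr_pM2l //; lra.
rewrite mul_div_a // => h5.
have : alpha * l v%:E < alpha * (l x%:E + eta / 4 / alpha) by rewrite ltr_pM2l.
rewrite mulrDr mul_div_a // => h6.
have m1' : alpha * ln n u%:E <= alpha * ln n v%:E by rewrite ler_pM2l.
rewrite /fn; move: eta0 h5 h6 hz1 hz2 m1'; rewrite /eta /f; lra.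
Unshelve. all: end_near. Qed.

End PathN.

Section Meas.
Context {R : realType} {d : measure_display} {Omega : measurableType d}.

Lemma gs_gen (I : set R) (Y : R -> Omega -> R) s (B : set R) :
  I s -> measurable B -> gen_sigma I Y (Y s @^-1` B).
Proof. by move=> Is mB; apply: sub_gen_smallest; exists s => //; exists B. Qed.

Lemma gs_sub (I : set R) (Y : R -> Omega -> R) :
  (forall s, I s -> measurable_fun setT (Y s)) -> gen_sigma I Y `<=` measurable.
Proof.
move=> mY; apply: smallest_sub; first exact: sigma_algebra_measurable.
by move=> _ [s Is [B mB <-]]; rewrite -[_ @^-1` _]setTI; exact: mY.
Qed.

Lemma gs_bigcup (I : set R) (Y : R -> Omega -> R) (A : nat -> set Omega) :
  (forall i, gen_sigma I Y (A i)) -> gen_sigma I Y (\bigcup_i A i).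
Proof. by move=> H; apply: sigma_algebra_bigcup. Qed.

Lemma gs_setC (I : set R) (Y : R -> Omega -> R) (A : set Omega) :
  gen_sigma I Y A -> gen_sigma I Y (~` A).
Proof. by move=> H; rewrite -setTD; apply: sigma_algebraCD. Qed.

Lemma gs_bigcap (I : set R) (Y : R -> Omega -> R) (A : nat -> set Omega) :
  (forall i, gen_sigma I Y (A i)) -> gen_sigma I Y (\bigcap_i A i).
Proof.
move=> H; rewrite -[X in gen_sigma _ _ X]setCK setC_bigcap.
by apply: gs_setC; apply: gs_bigcup => i; apply: gs_setC.
Qed.

End Meas.

Section Stop.
Context {R : realType} {d : measure_display} {Omega : measurableType d}
  (alpha : R) (a0 : 0 < alpha) (X0 : Omega -> R) (Z : R -> Omega -> R)
  (hZ : forall w, {within `[0, +oo[, continuous (fun t => Z t w)})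
  (l : \bar R -> R) (hl : in_M l).

Lemma Yc w : {within `[0, +oo[, continuous (fun t => X0 w + Z t w)}.
Proof. by move=> x; apply: cvgD; [exact: cvg_cst | exact: hZ]. Qed.

Lemma hit_char w (t : R) : (hit_time alpha X0 Z l w <= t%:E)%E <->
  exists s, [/\ 0 <= s, s <= t & X0 w + Z s w - alpha * l s%:E <= 0].
Proof. have := (hset_le _ (path_frc _ (Yc w) _ hl _ a0) t). exact. Qed.

Lemma hit_ge0 w : (0 <= hit_time alpha X0 Z l w)%E.
Proof. exact: hset_ge0. Qed.

Definition qf (t : R) (j m : nat) : R :=
  if j%:R / m.+1%:R <= t then j%:R / m.+1%:R else t.

Lemma qf_in t j m : 0 <= t -> 0 <= qf t j m /\ qf t j m <= t.
Proof.
move=> t0; rewrite /qf; case: ifP => jt; last by split.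
by split => //; rewrite divr_ge0.
Qed.

Lemma hit_set_eq (t : R) : 0 <= t ->
  [set w | (hit_time alpha X0 Z l w <= t%:E)%E] =
  \bigcap_k \bigcup_j \bigcup_m
    [set w | X0 w + Z (qf t j m) w < alpha * l (qf t j m)%:E + k.+1%:R^-1].
Proof.
move=> t0; apply/seteqP; split => w /=.
- move=> /hit_char [s [s0 st fs]] k _.
  have [e [e0 eE]] : exists e : R, 0 < e /\ k.+1%:R^-1 = e.
    by exists k.+1%:R^-1; rewrite invr_gt0.
  rewrite eE.
  move: st; rewrite le_eqVlt => /predU1P [st|st].
    exists (Num.trunc t).+1 => //; exists 0%N => //=.
    rewrite /qf divr1 leNgt truncnS_gt /= -st; lra.
  have /nbhs_ballP [dl /= dl0 Hdl] := @Z_near R _ (Yc w) s s0 _ e0.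
  have me : 0 < Num.min dl (t - s) by rewrite lt_min dl0 subr_gt0.
  have [m hm] := filter_ex (near_infty_natSinv_lt (PosNum me)).
  rewrite /= lt_min in hm; move/andP: hm => [hm1 hm2].
  set M := m.+1%:R : R in hm1 hm2 *.
  have M0 : 0 < M by rewrite ltr0n.
  set n := Num.trunc (s * M).
  have hn1 : s * M < n%:R + 1 by rewrite natr1 truncnS_gt.
  have hn2 : n%:R <= s * M by rewrite truncn_le mulr_ge0 // ltW.
  exists n.+1 => //; exists m => //=.
  have q1 : s < n.+1%:R / M by rewrite ltr_pdivlMr // -natr1.
  have q2 : n.+1%:R / M <= s + M^-1.
    by rewrite ler_pdivrMr // mulrDl mulVf ?gt_eqF // -natr1 lerD2r.
  have q3 : n.+1%:R / M <= t by clearbody M n; lra.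
  rewrite /qf -/M q3.
  set q := n.+1%:R / M in q1 q2 q3 *; clearbody q M n.
  have q0 : 0 <= q by lra.
  have hb : ball s dl q.
    rewrite -ball_normE /ball_ /= distrC ger0_norm ?subr_ge0; last by lra.
    lra.
  have /ltr_normlP [hz1 hz2] := Hdl q hb q0.
  have lq : l s%:E <= l q%:E by apply: (lM_mono _ hl); lra.
  have : alpha * l s%:E <= alpha * l q%:E by rewrite ler_pM2l.
  lra.
- move=> H; apply: contrapT => nle.
  have pos : forall s, 0 <= s -> s <= t -> 0 < X0 w + Z s w - alpha * l s%:E.
    move=> s s0 st; rewrite ltNge; apply/negP => fs; apply: nle.
    by apply/hit_char; exists s.
  have [k Hk] := path_unif _ (Yc w) _ hl _ a0 _ pos.
  have [j _ [m _ /=]] := H k I.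
  have [q0 qt] := qf_in t j m t0.
  have := Hk _ q0 qt; move: (k.+1%:R^-1 : R) => e; lra.
Qed.

End Stop.

Section Stop2.
Context {R : realType} {d : measure_display} {Omega : measurableType d}
  (alpha : R) (a0 : 0 < alpha) (X0 : Omega -> R) (Z : R -> Omega -> R)
  (hZ : forall w, {within `[0, +oo[, continuous (fun t => Z t w)})
  (hX0 : measurable_fun setT X0)
  (hZm : forall t, 0 <= t -> measurable_fun setT (Z t)).

Lemma Ym (s : R) : 0 <= s -> measurable_fun setT (fun w => X0 w + Z s w).
Proof. by move=> s0; apply: measurable_realfun.measurable_funD => //; exact: hZm. Qed.

Lemma hit_stop (l : \bar R -> R) (hl : in_M l) :
  stopping_time (fun t w => X0 w + Z t w) (hit_time alpha X0 Z l).
Proof.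
split; first by move=> w; exact: hit_ge0.
move=> t t0; rewrite /natural_filtration (@hit_set_eq R d Omega alpha a0 X0 Z hZ l hl t t0).
apply: gs_bigcap => k; apply: gs_bigcup => j; apply: gs_bigcup => m.
set q := qf t j m; set c := alpha * l q%:E + k.+1%:R^-1.
have -> : [set w | X0 w + Z q w < c] =
    (fun t w => X0 w + Z t w) q @^-1` [set` `]-oo, c[%R].
  by apply/seteqP; split => w /=; rewrite in_itv.
apply: gs_gen; last exact: measurable_itv.
by have [q0 qt] := qf_in t j m t0; rewrite /= in_itv /= q0 qt.
Qed.

Lemma hit_meas (l : \bar R -> R) (hl : in_M l) (t : R) :
  measurable [set w | (hit_time alpha X0 Z l w <= t%:E)%E].
Proof.
case: (ltP t 0) => t0.
  rewrite (_ : [set w | _] = set0) //; apply/seteqP; split => w //= H.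
  have h0 : (0 <= hit_time alpha X0 Z l w)%E by exact: hit_ge0.
  by have := le_trans h0 H; rewrite lee_fin leNgt t0.
have [_ /(_ t t0)] := hit_stop _ hl.
apply: gs_sub => s; rewrite /= in_itv /= => /andP [s0 _]; exact: Ym.
Qed.

Lemma disc_meas (D : R) (D0 : 0 < D) (l : \bar R -> R) (t : R) :
  measurable [set w | (hit_time_disc D alpha X0 Z l w <= t%:E)%E].
Proof.
rewrite (_ : [set w | _] = \bigcup_k [set w | k%:R * D <= t /\
    X0 w + Z (k%:R * D) w - alpha * l (k%:R * D)%:E <= 0]).
  apply: bigcupT_measurable => k.
  case: (leP (k%:R * D) t) => kt; last first.
    rewrite (_ : [set w | _] = set0) //; apply/seteqP; split => w // [kt' _].
    by [].
  have k0 : 0 <= k%:R * D by rewrite mulr_ge0 // ltW.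
  rewrite (_ : [set w | _] = setT `&` (fun w => X0 w + Z (k%:R * D) w) @^-1`
      [set` `]-oo, alpha * l (k%:R * D)%:E]%R]).
    by apply: Ym; [exact: k0 | exact: measurableT | exact: measurable_itv].
  apply/seteqP; split => w /=; rewrite in_itv /= subr_le0.
    by case.
  by case => _ H; split.
apply/seteqP; split => w /=.
  by move=> /(dset_le _ D0 (fun u => X0 w + Z u w - alpha * l u%:E)) [k [kt fk]]; exists k.
by move=> [k _ [kt fk]]; apply/(dset_le _ D0 (fun u => X0 w + Z u w - alpha * l u%:E)); exists k.
Qed.

End Stop2.

Section Lim.
Context {R : realType} {d : measure_display} {Omega : measurableType d}
  (P : probability Omega R).

Lemma Pfin {E : set Omega} : measurable E -> P E \is a fin_num.
Proof. by move=> mE; exact: fin_num_measure. Qed.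

Lemma Ple {E F : set Omega} : measurable E -> measurable F -> E `<=` F ->
  fine (P E) <= fine (P F).
Proof.
move=> mE mF EF; apply: fine_le; rewrite ?inE; [exact: Pfin|exact: Pfin|].
by apply: le_measure => //; rewrite inE.
Qed.

Lemma sandwich (A : nat -> set Omega) (B : set Omega) :
  (forall n, measurable (A n)) -> measurable B ->
  P.-negligible (B `\` [set w | \forall n \near \oo, A n w]) ->
  (forall w, ~ B w -> \forall n \near \oo, ~ A n w) ->
  (fun n => fine (P (A n))) @ \oo --> fine (P B).
Proof.
move=> mA mB negl up.
pose C n := \bigcap_m A (m + n)%N.
pose D n := \bigcup_m A (m + n)%N.
have mC n : measurable (C n) by apply: bigcapT_measurable.
have mD n : measurable (D n) by apply: bigcupT_measurable.
have mL : measurable (\bigcup_n C n) by apply: bigcupT_measurable.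
have mU : measurable (\bigcap_n D n) by apply: bigcapT_measurable.
have ndC : {homo C : n m / (n <= m)%N >-> (n <= m)%O}.
  move=> n m nm; apply/subsetPset => w Cw i _.
  by have := Cw (i + (m - n))%N I; rewrite -addnA subnK.
have niD : {homo D : n m / (n <= m)%N >-> (m <= n)%O}.
  move=> n m nm; apply/subsetPset => w [i _ Aw]; exists (i + (m - n))%N => //.
  by rewrite -addnA subnK.
have D0fin : (P (D 0%N) < +oo)%E by rewrite ltey_eq Pfin.
have cvC := nondecreasing_cvg_mu (mu:=P) mC mL ndC.
have cvD := nonincreasing_cvg_mu D0fin mD mU niD.
have CA n : C n `<=` A n by move=> w /(_ 0%N I).
have AD n : A n `<=` D n by move=> w Aw; exists 0%N.
have BL : fine (P B) <= fine (P (\bigcup_n C n)).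
  case: negl => N [mN PN BN].
  have sub : B `<=` (\bigcup_n C n) `|` N.
    move=> w Bw; case: (pselect ([set w | \forall n \near \oo, A n w] w)) => H.
      left; case: H => N0 _ HN0; exists N0 => // i _; apply: HN0 => /=.
      by rewrite leq_addl.
    by right; apply: BN.
  have h : (P B <= P (\bigcup_n C n) + P N)%E.
    apply: le_trans (@measureU2 _ _ _ P _ _ mL mN).
    exact: (le_measure P (mem_set mB) (mem_set (measurableU _ _ mL mN)) sub).
  move: h; rewrite PN adde0 => h.
  by apply: fine_le; rewrite ?inE; [exact: Pfin|exact: Pfin|].
have UB : fine (P (\bigcap_n D n)) <= fine (P B).
  apply: Ple => // w Uw; apply: contrapT => nB.
  case: (up w nB) => N0 _ HN0.
  case: (Uw N0 I) => i _ Ai; apply: (HN0 (i + N0)%N) => //=.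
  by rewrite leq_addl.
have finL := Pfin mL; have finU := Pfin mU.
have cvC' : (P \o C) @ \oo --> (fine (P (\bigcup_n C n)))%:E by rewrite fineK.
have cvD' : (P \o D) @ \oo --> (fine (P (\bigcap_n D n)))%:E by rewrite fineK.
move: cvC' cvD' => /fine_cvgP [_ {}cvC] /fine_cvgP [_ {}cvD].
apply/cvgrPdist_lt => e e0.
move: (cvC) => /cvgr_dist_lt /(_ e e0) hC; move: (cvD) => /cvgr_dist_lt /(_ e e0) hD.
near=> n.
have hC' : `|fine (P (\bigcup_n C n)) - (fine \o (P \o C)) n| < e by near: n; exact: hC.
have hD' : `|fine (P (\bigcap_n D n)) - (fine \o (P \o D)) n| < e by near: n; exact: hD.
have h1 := Ple (mC n) (mA n) (CA n).
have h2 := Ple (mA n) (mD n) (AD n).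
move: hD' hC'; rewrite /= => /ltr_normlP [hD1 hD2] /ltr_normlP [hC1 hC2].
apply/ltr_normlP; split; lra.
Unshelve. all: end_near. Qed.

End Lim.

Theorem proposition2p11 (R : realType) (d : measure_display) (Omega : measurableType d)
  (P : probability Omega R) (alpha : R) (X0 : Omega -> R) (Z : R -> Omega -> R)
  (Delta : nat -> R) (ln : nat -> \bar R -> R) (l : \bar R -> R) :
  0 < alpha ->
  measurable_fun setT X0 ->
  (forall t, 0 <= t -> measurable_fun setT (Z t)) ->
  (forall w, {within `[0, +oo[, continuous (fun t => Z t w)}) ->
  (forall w, Z 0 w = 0) ->
  indep_rv_process P X0 Z ->
  crossing_property P X0 Z ->
  (forall n, 0 < Delta n) ->
  Delta @ \oo --> 0 ->
  (forall n, in_M (ln n)) ->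
  in_M l ->
  cvg_M ln l ->
  cvg_M (fun n => Gamma_disc P (Delta n) alpha X0 Z (ln n)) (Gamma P alpha X0 Z l).
Proof.
move=> a0 hX0 hZm hZ _ _ cross D0 Dcvg hln hl cv t.
case: t => [t| |] //; last first.
  move=> _ _; rewrite /Gamma /Gamma_disc.
  have E (T : Omega -> \bar R) : [set w | (T w <= +oo)%E] = setT.
    by apply/seteqP; split => w //= _; exact: leey.
  under eq_fun => n do rewrite E.
  rewrite E; exact: cvg_cst.
rewrite lee_fin => t0 cont.
set tau := hit_time alpha X0 Z l.
set B := [set w | (tau w <= t%:E)%E].
set B' := [set w | (tau w < t%:E)%E].
have mB : measurable B by exact: (hit_meas _ a0 _ _ hZ hX0 hZm _ hl t).
pose Bk k := [set w | (tau w <= (t - k.+1%:R^-1)%:E)%E].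
have mBk k : measurable (Bk k) by exact: (hit_meas _ a0 _ _ hZ hX0 hZm _ hl _).
have BkE : \bigcup_k Bk k = B'.
  apply/seteqP; split => w /=.
    move=> [k _ /= H]; apply: le_lt_trans H _; rewrite lte_fin ltrBlDr ltrDl.
    by rewrite invr_gt0.
  move=> H.
  have fin : tau w \is a fin_num.
    by rewrite ge0_fin_numE ?(lt_trans H) ?ltry //; exact: hit_ge0.
  have r0 : 0 < t - fine (tau w) by rewrite subr_gt0 -lte_fin fineK.
  have [k hk] := filter_ex (near_infty_natSinv_lt (PosNum r0)).
  exists k => //; rewrite /Bk /= -(fineK fin) lee_fin; move: hk => /= hk.
  move: (k.+1%:R^-1 : R) hk => e hk; lra.
have mB' : measurable B' by rewrite -BkE; exact: bigcupT_measurable.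
have ndBk : {homo Bk : n m / (n <= m)%N >-> (n <= m)%O}.
  move=> n m nm; apply/subsetPset => w /= H; apply: le_trans H _.
  rewrite lee_fin lerD2l lerN2 lef_pV2 ?posrE ?ltr0n // ler_nat ltnS //.
have cv1 := nondecreasing_cvg_mu (mu:=P) mBk (bigcupT_measurable _ mBk) ndBk.
rewrite BkE in cv1.
have finB' := Pfin P mB'; have finB := Pfin P mB.
have cv1' : (P \o Bk) @ \oo --> (fine (P B'))%:E by rewrite fineK.
move: cv1' => /fine_cvgP [_ cv2].
have sk : (fun k : nat => (t - k.+1%:R^-1)%:E) @ \oo --> t%:E.
  apply: cvg_EFin; first exact: nearW.
  apply/cvgrPdist_lt => e e0; near=> k => /=.
  rewrite opprB addrC subrK ger0_norm ?invr_ge0 //.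
  by near: k; exact: (near_infty_natSinv_lt (PosNum e0)).
have cv3 := cvg_comp _ _ sk cont.
have PBB : fine (P B') = fine (P B).
  exact: (cvg_unique _ cv2 cv3).
have PBB' : P B' = P B by rewrite -(fineK finB') PBB fineK.
pose N k := [set w | (tau w < +oo)%E /\
   inf [set Z (fine (tau w) + s) w - Z (fine (tau w)) w | s in `[0, k.+1%:R^-1]] = 0].
have negN : P.-negligible (\bigcup_k N k).
  apply: negligible_bigcup => k; apply: cross; last by rewrite invr_gt0.
  exact: (hit_stop _ a0 _ _ hZ _ hl).
have negD : P.-negligible (B `\` B').
  exists (B `\` B'); split => //; first exact: measurableD.
  rewrite measureD // ?(ltey_eq, finB) // setIidr; last by move=> w /ltW.
  apply: eq_trans (subee finB); congr (_ - _)%E; exact: PBB'.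
rewrite /Gamma_disc /Gamma -/tau -/B.
apply: sandwich => //; first by move=> n; exact: (disc_meas _ _ _ hX0 hZm _ (D0 n) _ _).
- apply: negligibleS (negligibleU negD negN) => w [Bw nlim].
  case: (pselect (B' w)) => B'w; last by left.
  right; apply: contrapT => nN; apply: nlim.
  have nNk k : ~ N k w by move=> Nk; apply: nN; exists k.
  have fin : tau w \is a fin_num.
    by rewrite ge0_fin_numE ?(lt_trans B'w) ?ltry //; exact: hit_ge0.
  set r := fine (tau w).
  have rE : tau w = r%:E by rewrite fineK.
  have r0 : 0 <= r by rewrite -lee_fin -rE; exact: hit_ge0.
  have rt : r < t by rewrite -lte_fin -rE.
  have fr : X0 w + Z r w - alpha * l r%:E <= 0.
    have : (tau w <= r%:E)%E by rewrite rE.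
    move=> /(hit_char _ a0 _ _ hZ _ hl w _) [s [s0 sr fs]].
    have rs : r <= s.
      rewrite -lee_fin -rE; exact: (hset_le_intro s0 fs).
    by have -> : r = s by apply/eqP; rewrite eq_le rs sr.
  have tr0 : 0 < t - r by rewrite subr_gt0.
  have [k hk] := filter_ex (near_infty_natSinv_lt (PosNum tr0)).
  move: hk => /= hk.
  have [s' [s'0 s'h zs]] : exists s', [/\ 0 <= s', s' <= k.+1%:R^-1 & Z (r + s') w < Z r w].
    apply: contrapT => H.
    have Hge : forall s, 0 <= s -> s <= k.+1%:R^-1 -> Z r w <= Z (r + s) w.
      move=> s s0 sh; rewrite leNgt; apply/negP => zlt; apply: H; by exists s; split.
    apply: (nNk k); split; first by rewrite rE ltry.
    rewrite -/r; set S := [set _ | _ in _].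
    have S0 : S 0.
      exists 0; last by rewrite addr0 subrr.
      by rewrite /= in_itv /= lexx invr_ge0 ler0n.
    have lbS : lbound S 0.
      move=> _ [s /= /[!in_itv] /andP [s0 sh] <-]; rewrite subr_ge0; exact: Hge.
    apply/eqP; rewrite eq_le; apply/andP; split.
      by apply: (ge_inf _ S0); exists 0.
    by apply: lb_le_inf => //; exists 0.
  have s0 : 0 <= r + s' by rewrite addr_ge0.
  have st : r + s' < t by move: (k.+1%:R^-1 : R) hk s'h => e; lra.
  have ls : alpha * l r%:E <= alpha * l (r + s')%:E.
    by rewrite ler_pM2l //; apply: (lM_mono _ hl); rewrite lerDl.
  have fs : X0 w + Z (r + s') w - alpha * l (r + s')%:E < 0 by lra.
  exact: (lower_path _ (Yc _ _ hZ w) _ hl _ a0 _ D0 Dcvg _ hln cv _ _ s0 st fs).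
- move=> w nB.
  have pos : forall s, 0 <= s -> s <= t -> 0 < X0 w + Z s w - alpha * l s%:E.
    move=> s s0 st; rewrite ltNge; apply/negP => fs; apply: nB.
    by apply/(hit_char _ a0 _ _ hZ _ hl w _); exists s.
  exact: (upper_path _ (Yc _ _ hZ w) _ hl _ a0 _ D0 _ hln cv _ pos).
Unshelve. all: end_near. Qed.
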